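(* Under the standing assumptions below, for any finite partitions $\mathcal P_1,\mathcal P_2$ of $\lambda$, $I(\mathcal P_1\sqcap\mathcal P_2)=I(\mathcal P_1)\cap I(\mathcal P_2)$.
   Context: Standing assumptions: $G$ is a finite graph with at least one edge which is trivially power-colorable (for every positive integer $n$, every $\chi(G)$-coloring of $G^n$ is of the form $v\mapsto\phi(v_i)$ for some coordinate $i$ and proper coloring $\phi$ of $G$), $k=\chi(G)$, $\lambda$ is an infinite cardinal, and $\Phi$ is a fixed proper $k$-coloring of $G^\lambda$ (vertex set $V(G)^\lambda$, $(v_\xi)$ adjacent to $(w_\xi)$ iff $v_\xi w_\xi\in E(G)$ for all $\xi<\lambda$). A finite partition of $\lambda$ is a partition of $\lambda$ into finitely many nonempty pieces. For a finite partition $\mathcal P$, $V_{\mathcal P}=\{\mathbf v\in V(G^\lambda): \mathbf v\restriction A \text{ is constant for each } A\in\mathcal P\}$, and for $\mathbf v\in V_{\mathcal P}$, $A\in\mathcal P$, $\mathbf v_A$ is the constant value of $\mathbf v$ on $A$. If $\mathcal P=\{A_1,\dots,A_n\}$, the induced subgraph on $V_{\mathcal P}$ is isomorphic to $G^n$ via $\mathbf v\mapsto(\mathbf v_{A_1},\dots,\mathbf v_{A_n})$, so there are $i$ and a proper coloring $\phi$ of $G$ with $\Phi(\mathbf v)=\phi(\mathbf v_{A_i})$ for all $\mathbf v\in V_{\mathcal P}$; since $G$ has an edge, $A_i$ is uniquely determined and is denoted $I(\mathcal P)$. The greatest common refinement is $\mathcal P_1\sqcap\mathcal P_2=\{A\cap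 B: A\in\mathcal P_1, B\in\mathcal P_2, A\cap B\ne\emptyset\}$. *)

(* Defs.v *)
From mathcomp Require Import all_boot.
From mathcomp Require Import boolp classical_sets cardinality.
From Stdlib Require Import ClassicalEpsilon.
Set Implicit Arguments. Unset Strict Implicit. Unset Printing Implicit Defensive.
Local Open Scope classical_set_scope.

Section Defs.
Variables (V : finType) (e : rel V).

Definition simple_graph : Prop := symmetric e /\ irreflexive e.
Definition has_edge : Prop := exists u v, e u v.

Definition proper_coloring (k : nat) (phi : V -> 'I_k) : Prop :=
  forall u v, e u v -> phi u <> phi v.

Definition is_chromatic_number (k : nat) : Prop :=
  (exists phi : V -> 'I_k, proper_coloring phi) /\
  (forall m, m < k -> forall phi : V -> 'I_m, ~ proper_coloring phi).

Definition pow_adj (I : Type) (v w : I -> V) : Prop := forall i, e (v i) (w i).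

Definition proper_pow_coloring (I : Type) (k : nat) (c : (I -> V) -> 'I_k) : Prop :=
  forall v w, pow_adj v w -> c v <> c w.

(* trivially power-colorable, with k = chi(G) *)
Definition trivially_power_colorable (k : nat) : Prop :=
  forall n, 0 < n -> forall c : ('I_n -> V) -> 'I_k, proper_pow_coloring c ->
    exists (i : 'I_n) (phi : V -> 'I_k), proper_coloring phi /\
      forall v, c v = phi (v i).

Variable L : Type.

Definition infinite_type : Prop :=
  ~ exists n (f : 'I_n -> L), forall x, exists i, f i = x.

Definition finite_partition (P : set (set L)) : Prop :=
  [/\ finite_set P,
      (forall A, P A -> A !=set0),
      (forall x, exists A, P A /\ A x) &
      (forall A B x, P A -> P B -> A x -> B x -> A = B)].

Definition V_part (P : set (set L)) (v : L -> V) : Prop :=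
  forall A, P A -> forall x y, A x -> A y -> v x = v y.

Definition meet_part (P1 P2 : set (set L)) : set (set L) :=
  [set C | exists A B, [/\ P1 A, P2 B, C = A `&` B & C !=set0]].

Variables (k : nat) (Phi : (L -> V) -> 'I_k).

Definition is_I (P : set (set L)) (A : set L) : Prop :=
  P A /\ exists phi : V -> 'I_k, proper_coloring phi /\
    forall v, V_part P v -> forall x, A x -> Phi v = phi (v x).

(* I(P), chosen by (classical) description; uniquely determined under the
   standing assumptions. *)
Definition I_part (P : set (set L)) : set L :=
  epsilon (inhabits (@set0 L)) (is_I P).

End Defs.

(* Main.v *)
Require Import Defs.
From mathcomp Require Import all_boot.
From mathcomp Require Import boolp classical_sets cardinality.
From Stdlib Require Import ClassicalEpsilon.
Local Open Scope classical_set_scope.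

Lemma enum_fin T (Q : set T) : finite_set Q -> exists n (g : 'I_n -> T),
  (forall i, Q (g i)) /\ (forall C, Q C -> exists i, g i = C).
Proof.
case=> n /card_esym /card_bijP [f [h fK hK]].
have Hi : forall i : 'I_n, (nat_of_ord i) \in `I_n.
  by move=> i; rewrite inE /=; exact: ltn_ord.
exists n, (fun i => val (f (SigSub (Hi i)))); split.
  by move=> i; have := set_valP (f (SigSub (Hi i))).
move=> C QC.
have QC' : C \in Q by rewrite inE.
have := set_valP (h (SigSub QC')).
rewrite /= => lt.
exists (Ordinal lt).
have -> : SigSub (Hi (Ordinal lt)) = h (SigSub QC') by apply: val_inj.
by rewrite hK.
Qed.

Lemma uniq_I (V : finType) (e : rel V) (k : nat) (L : Type)
  (Phi : (L -> V) -> 'I_k) (Hedge : has_edge e) (P : set (set L))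
  (HP : finite_partition P) (A A' : set L) :
  is_I e Phi P A -> is_I e Phi P A' -> A = A'.
Proof.
case: HP => _ Hne _ Hdis.
move=> [PA [phi [_ Hphi]]] [PA' [phi' [pr' Hphi']]].
apply: contrapT => AA'.
case: Hedge => u [w euw].
have [x0 Ax0] := Hne _ PA.
have [x' A'x'] := Hne _ PA'.
have nAx' : ~ A x' by move=> Ax'; apply: AA'; exact: (Hdis _ _ x' PA PA').
pose va (a : V) (x : L) := if pselect (A x) then u else a.
have Vva : forall a, V_part P (va a).
  move=> a C PC x y Cx Cy; rewrite /va.
  case: pselect => Ax; case: pselect => Ay //.
    by exfalso; apply: Ay; rewrite (Hdis _ _ x PA PC Ax Cx).
  by exfalso; apply: Ax; rewrite (Hdis _ _ y PA PC Ay Cy).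
have key : forall a, phi' a = phi u.
  move=> a.
  have h1 := Hphi' _ (Vva a) x' A'x'.
  have h2 := Hphi _ (Vva a) x0 Ax0.
  rewrite /va in h1 h2.
  move: h1 h2; case: (pselect (A x')) => [h|h]; first by exfalso.
  case: (pselect (A x0)) => [h'|h'] //.
  by move=> <- <-.
apply: (pr' u w euw); by rewrite !key.
Qed.

Lemma exist_I (V : finType) (e : rel V) (k : nat) (L : Type)
  (Phi : (L -> V) -> 'I_k)
  (Htpc : trivially_power_colorable e k)
  (HPhi : proper_pow_coloring e Phi) (x0 : L) (Q : set (set L)) :
  finite_set Q -> (forall C, Q C -> C !=set0) ->
  (forall x, exists C, Q C /\ C x) -> exists C, is_I e Phi Q C.
Proof.
move=> /enum_fin [n [g [gQ gsurj]]] Qne cover.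
have cov' : forall x, exists i, g i x.
  move=> x; have [C [QC Cx]] := cover x; have [i gi] := gsurj C QC.
  by exists i; rewrite gi.
have [idx Hidx] := boolp.choice (P := fun x i => g i x) cov'.
have pt' : forall i, exists y, g i y by move=> i; exact: Qne _ (gQ i).
have [pt Hpt] := boolp.choice (P := fun i y => g i y) pt'.
pose emb (w : 'I_n -> V) (x : L) := w (idx x).
pose c (w : 'I_n -> V) := Phi (emb w).
have pc : proper_pow_coloring e c.
  by move=> w w' ww'; apply: HPhi => x; exact: ww'.
have n0 : 0 < n by case: (idx x0) => j; case: n {g gQ gsurj cov' idx Hidx pt' pt Hpt emb c pc} j.
have [i [phi [prphi Hc]]] := Htpc n n0 c pc.
exists (g i); split; first exact: gQ.
exists phi; split => // v Vv x gix.
pose w j := v (pt j).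
have embw : emb w = v.
  apply: funext => y; rewrite /emb /w.
  exact: (Vv _ (gQ (idx y)) _ _ (Hpt (idx y)) (Hidx y)).
transitivity (c w); first by rewrite /c embw.
rewrite Hc /w.
by rewrite (Vv _ (gQ i) _ _ (Hpt i) gix).
Qed.

Theorem mainTheorem17 (V : finType) (e : rel V) (k : nat) (L : Type)
  (Phi : (L -> V) -> 'I_k)
  (HG : simple_graph e) (Hedge : has_edge e)
  (Hchi : is_chromatic_number e k)
  (Htpc : trivially_power_colorable e k)
  (HL : infinite_type L)
  (HPhi : proper_pow_coloring e Phi)
  (P1 P2 : set (set L)) :
  finite_partition P1 -> finite_partition P2 ->
  I_part e Phi (meet_part P1 P2) = I_part e Phi P1 `&` I_part e Phi P2.
Proof.
move=> HP1 HP2.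
have [x0 _] : exists x0 : L, True.
  apply: contrapT => nL; apply: HL; exists 0, (fun i : 'I_0 => False_rect L (notF (ltn_ord i))).
  by move=> x; exfalso; apply: nL; exists x.
have HP1' := HP1; have HP2' := HP2.
case: HP1' => fin1 ne1 cov1 dis1; case: HP2' => fin2 ne2 cov2 dis2.
set Q := meet_part P1 P2.
have finQ : finite_set Q.
  apply: (sub_finite_set (B := (fun p : set L * set L => p.1 `&` p.2) @` (P1 `*` P2))).
    by move=> C [A [B [PA PB -> _]]]; exists (A, B).
  by apply: finite_image; apply: finite_setX.
have neQ : forall C, Q C -> C !=set0 by move=> C [A [B [_ _ _ ?]]].
have covQ : forall x, exists C, Q C /\ C x.
  move=> x; have [A [PA Ax]] := cov1 x; have [B [PB Bx]] := cov2 x.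
  by exists (A `&` B); split => //; exists A, B; split => //; exists x.
have exQ := @exist_I V e k L Phi Htpc HPhi x0 Q finQ neQ covQ.
have IQ := epsilon_spec (inhabits (@set0 L)) (is_I e Phi Q) exQ.
rewrite -/(I_part e Phi Q) in IQ.
have VQ1 : forall v : L -> V, V_part P1 v -> V_part Q v.
  move=> v Vv C QC x y Cx Cy; move: QC; rewrite /Q /meet_part /= => -[A [B [PA _ eC _]]].
  rewrite eC in Cx Cy; case: Cx => Ax _; case: Cy => Ay _; exact: Vv _ PA _ _ Ax Ay.
have VQ2 : forall v : L -> V, V_part P2 v -> V_part Q v.
  move=> v Vv C QC x y Cx Cy; move: QC; rewrite /Q /meet_part /= => -[A [B [_ PB eC _]]].
  rewrite eC in Cx Cy; case: Cx => _ Bx; case: Cy => _ By; exact: Vv _ PB _ _ Bx By.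
case: IQ => [QI [phi [prphi Hphi]]].
have [A [B [PA PB eQ [z zI]]]] : exists A B, [/\ P1 A, P2 B,
  I_part e Phi Q = A `&` B & I_part e Phi Q !=set0] := QI.
move: (zI); rewrite eQ => -[Az Bz].
have I1 : is_I e Phi P1 A.
  split => //; exists phi; split => // v Vv x Ax.
  rewrite (Hphi v (VQ1 _ Vv) z); last by rewrite eQ.
  by rewrite (Vv _ PA _ _ Az Ax).
have I2 : is_I e Phi P2 B.
  split => //; exists phi; split => // v Vv x Bx.
  rewrite (Hphi v (VQ2 _ Vv) z); last by rewrite eQ.
  by rewrite (Vv _ PB _ _ Bz Bx).
have E1 : I_part e Phi P1 = A.
  apply: (@uniq_I V e k L Phi Hedge P1 HP1) => //.
  exact: epsilon_spec (inhabits (@set0 L)) (is_I e Phi P1) (ex_intro _ A I1).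
have E2 : I_part e Phi P2 = B.
  apply: (@uniq_I V e k L Phi Hedge P2 HP2) => //.
  exact: epsilon_spec (inhabits (@set0 L)) (is_I e Phi P2) (ex_intro _ B I2).
by rewrite E1 E2.
Qed.
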